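(* Fix a prime $p$ and $n\in\mathbb{N}$. The assignment $(A\subseteq B)\mapsto G(A\subseteq B)$ from objects of $\mathcal{S}(\mathbb{Z}/p^n)$ to groups preserves indecomposability (if $(A\subseteq B)$ is an indecomposable object of $\mathcal{S}(\mathbb{Z}/p^n)$ then $G(A\subseteq B)$ is an indecomposable group, i.e. not a direct product of two nontrivial subgroups), and it preserves and reflects isomorphisms: $(A\subseteq B)\cong(A'\subseteq B')$ in $\mathcal{S}(\mathbb{Z}/p^n)$ if and only if $G(A\subseteq B)\cong G(A'\subseteq B')$ as groups.
   Context: $\mathcal{S}(\mathbb{Z}/p^n)$ is the category whose objects are pairs $(A\subseteq B)$ where $B$ is a finite abelian group with $p^nB=0$ and $A$ is a subgroup of $B$; a morphism $(A\subseteq B)\to(A'\subseteq B')$ is a group homomorphism $f\colon B\to B'$ with $f(A)\subseteq A'$. An object is indecomposable if it is nonzero and not isomorphic to a direct sum $(A_1\oplus A_2\subseteq B_1\oplus B_2)$ of two nonzero objects. For such an object with $A$ of exponent $p^m$ and inclusion $\iota\colon A\to B$, $G(A\subseteq B)$ is the set $A\oplus B\oplus \mathbb{Z}/p^m$ with group operation $(a,b,d)+(a',b',d')=(a+a',\,b+d\,\iota(a')+b',\,d+d')$. *)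

(* Defs.v *)
From HB Require Import structures.
From mathcomp Require Import all_boot all_order all_algebra all_fingroup all_solvable.
Set Implicit Arguments. Unset Strict Implicit. Unset Printing Implicit Defensive.
Import GRing.Theory.

Local Open Scope group_scope.

(* An object (A \subseteq B) of S(Z/p^n): a finite abelian group B (written
   multiplicatively, as a subgroup of an ambient finGroupType) together with
   a subgroup A of B.  The condition p^n B = 0 is [is_Sobj p n] below. *)
Record sobj (gT : finGroupType) := SObj {
  sA : {group gT};
  sB : {group gT};
  sA_sub : sA \subset sB;
  sB_abelian : abelian sB
}.

Definition is_Sobj (p n : nat) (gT : finGroupType) (X : sobj gT) : Prop :=
  exponent (sB X) %| p ^ n.

Definition Siso (gT hT : finGroupType) (A B : {set gT}) (A' B' : {set hT}) : Prop :=
  exists f : {morphism B >-> hT}, isom B B' f /\ f @* A = A'.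

Definition Sindec (p n : nat) (gT : finGroupType) (X : sobj gT) : Prop :=
  sB X :!=: 1 /\
  ~ (exists (gT1 gT2 : finGroupType) (X1 : sobj gT1) (X2 : sobj gT2),
      [/\ is_Sobj p n X1, is_Sobj p n X2, sB X1 :!=: 1, sB X2 :!=: 1 &
          Siso (sA X) (sB X) (setX (sA X1) (sA X2)) (setX (sB X1) (sB X2))]).

Definition gindec (G : finGroupType) : Prop :=
  ~ (exists H K : {group G}, [/\ H \x K = [set: G], H :!=: 1 & K :!=: 1]).

(* The group G(A \subseteq B) = A x B x Z/p^m (exponent A = p^m) with
   (a,b,d)(a',b',d') = (a a', b a'^d b', d + d'). *)
Section GConstruction.
Variables (gT : finGroupType) (X : sobj gT).

Definition gk := (exponent (sA X)).-1.
Lemma gk_eq : gk.+1 = exponent (sA X).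
Proof. by rewrite /gk prednK // exponent_gt0. Qed.

Definition gtrip := (gT * gT * 'I_gk.+1)%type.
Definition gpred (x : gtrip) : bool := (x.1.1 \in sA X) && (x.1.2 \in sB X).

Definition Gcar : Type := {x : gtrip | gpred x}.
HB.instance Definition _ := Finite.on Gcar.

Lemma sAB_mem a : a \in sA X -> a \in sB X.
Proof. by move/(subsetP (sA_sub X)). Qed.

Definition Gmul_raw (x y : gtrip) : gtrip :=
  (x.1.1 * y.1.1, x.1.2 * y.1.1 ^+ x.2 * y.1.2, (x.2 + y.2)%R).

Lemma Gmul_proof (x y : Gcar) : gpred (Gmul_raw (val x) (val y)).
Proof.
case: x => [[[a b] d] /andP [/= Ha Hb]]; case: y => [[[a' b'] d'] /andP [/= Ha' Hb']].
by rewrite /gpred /= groupM // !groupM // groupX // sAB_mem.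
Qed.
Definition Gmul (x y : Gcar) : Gcar := exist (fun z : gtrip => gpred z) _ (Gmul_proof x y).

Lemma Gone_proof : gpred (1, 1, 0%R).
Proof. by rewrite /gpred /= !group1. Qed.
Definition Gone : Gcar := exist (fun z : gtrip => gpred z) _ Gone_proof.

Definition Ginv_raw (x : gtrip) : gtrip :=
  (x.1.1^-1, (x.1.1 ^+ (- x.2)%R)^-1 * x.1.2^-1, (- x.2)%R).

Lemma Ginv_proof (x : Gcar) : gpred (Ginv_raw (val x)).
Proof.
case: x => [[[a b] d] /andP [/= Ha Hb]].
by rewrite /gpred /= groupV Ha groupM // groupV // groupX // sAB_mem.
Qed.
Definition Ginv (x : Gcar) : Gcar := exist (fun z : gtrip => gpred z) _ (Ginv_proof x).

Lemma comB (u v : gT) : u \in sB X -> v \in sB X -> commute u v.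
Proof. move=> Hu Hv; exact: (centsP (sB_abelian X)). Qed.

Lemma expA_mod (a : gT) (d d' : 'I_gk.+1) : a \in sA X ->
  a ^+ (d + d')%R = a ^+ d * a ^+ d'.
Proof.
move=> Ha; rewrite -expgD /= expg_mod // gk_eq; exact: expg_exponent.
Qed.

Lemma GmulA : associative Gmul.
Proof.
case=> [[[a b] d] Hx]; case=> [[[a' b'] d'] Hy]; case=> [[[a'' b''] d''] Hz].
have /andP [Ha' Hb'] := Hy; have /andP [Ha'' Hb''] := Hz.
apply: val_inj; rewrite /= /Gmul_raw /= mulgA addrA; congr (_, _, _).
have Ba' := sAB_mem Ha'; have Ba'' := sAB_mem Ha''.
rewrite expA_mod // expgMn; last exact: comB.
rewrite !mulgA; congr (_ * _).
rewrite -!mulgA; congr (_ * _); congr (_ * _).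
rewrite !mulgA; congr (_ * _).
by apply: comB => //; rewrite groupX.
Qed.

Lemma Gmul1 : left_id Gone Gmul.
Proof.
case=> [[[a b] d] Hx]; apply: val_inj.
by rewrite /= /Gmul_raw /= mul1g expg0 !mul1g add0r.
Qed.

Lemma GmulV : left_inverse Gone Ginv Gmul.
Proof.
case=> [[[a b] d] Hx]; have /andP [Ha Hb] := Hx; apply: val_inj.
rewrite /= /Gmul_raw /= mulVg addNr; congr (_, _, _).
have Bx : a ^+ (- d)%R \in sB X by rewrite groupX // sAB_mem.
rewrite -(mulgA _ b^-1) (comB _ Bx) ?groupV // !mulgA mulVg mul1g mulVg.
done.
Qed.

HB.instance Definition _ := Finite_isGroup.Build Gcar GmulA Gmul1 GmulV.

End GConstruction.

Definition Gof (gT : finGroupType) (X : sobj gT) : finGroupType := Gcar X.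

(* Main.v *)
Require Import Defs.
From HB Require Import structures.
From mathcomp Require Import all_boot all_order all_algebra all_fingroup all_solvable.

Module Helpers.
Set Implicit Arguments. Unset Strict Implicit. Unset Printing Implicit Defensive.
Import GRing.Theory.
Local Open Scope group_scope.

Section Phi.
Variables (gT : finGroupType) (X : sobj gT).
Local Notation G := (Gof X).

Lemma GvalM (x y : G) : val (x * y) = Gmul_raw (val x) (val y).
Proof. by []. Qed.
Lemma val1 : val (1 : G) = (1, 1, 0%R).
Proof. by []. Qed.

Definition phi (b : gT) : G := insubd (1 : G) (1, b, 0%R).

Lemma val_phi b : b \in sB X -> val (phi b) = (1, b, 0%R).
Proof. by move=> Hb; rewrite /phi insubdK // unfold_in /gpred /= Hb group1.  Qed.

Lemma phiM : {in sB X &, {morph phi : x y / x * y}}.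
Proof.
move=> b b' Hb Hb'; apply: val_inj.
by rewrite GvalM !val_phi ?groupM // /Gmul_raw /= mul1g expg0 mulg1 addr0.
Qed.
Canonical phi_morphism := Morphism phiM.

Lemma phi_inj : 'injm phi.
Proof.
apply/injmP=> b b' Hb Hb' /(congr1 val); rewrite !val_phi //.
by case.
Qed.

Definition one1 : 'I_(gk X).+1 := inZp 1.

Lemma expA1 a : a \in sA X -> a ^+ one1 = a.
Proof.
move=> Ha; rewrite /one1 /= expg_mod ?expg1 // gk_eq; exact: expg_exponent.
Qed.

Lemma Gval_eq (x y : G) : val x = val y -> x = y.
Proof. exact: val_inj. Qed.

Lemma expA1' a : a \in sA X -> a ^+ (1 %% (gk X).+1) = a.
Proof. exact: expA1. Qed.

Definition mkG (a b : gT) (d : 'I_(gk X).+1) : G := insubd (1 : G) (a, b, d).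
Lemma val_mkG a b d : a \in sA X -> b \in sB X -> val (mkG a b d) = (a, b, d).
Proof. by move=> Ha Hb; rewrite /mkG insubdK // unfold_in /gpred /= Ha Hb. Qed.

Lemma phi_center : phi @* sB X = 'Z([set: G]).
Proof.
apply/eqP; rewrite eqEsubset; apply/andP; split.
  apply/subsetP=> _ /morphimP[b Hb _ ->]; apply/centerP; split; first by rewrite inE.
  move=> [[[a' b'] d'] Hy] _; have /andP [/= Ha' Hb'] := Hy.
  apply: val_inj; rewrite !GvalM val_phi // /Gmul_raw /=.
  by rewrite mul1g !mulg1 expg1n mulg1 add0r addr0 (comB Hb Hb').
apply/subsetP=> x /centerP [_ cx].
case: x cx => [[[a b] d] Hx] cx; have /andP [/= Ha Hb] := Hx.
have a1 : a = 1.
  have /(congr1 val) := cx (mkG 1 1 one1) (in_setT _).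
  rewrite !GvalM val_mkG //= /Gmul_raw /= expA1 // !mulg1 mul1g; case=> /(congr1 (fun z => z * b^-1)).
  by rewrite expg1n mulg1 mulgV mulgK => <-.
subst a.
have d0 : d = 0%R.
  have ed : exponent (sA X) %| d.
    apply/exponentP=> a' Ha'.
    have /(congr1 val) := cx (mkG a' 1 0%R) (in_setT _).
    rewrite !GvalM val_mkG //= /Gmul_raw /= !mulg1 mul1g; case=> /(congr1 (fun z => b^-1 * z)).
    by rewrite mul1g mulKg mulVg => ->.
  apply/val_inj => /=; apply/eqP; move: ed; rewrite -gk_eq.
  case: d {Hx cx} => [[|m] Hm] //= H.
  by have := dvdn_leq (ltn0Sn m) H; rewrite leqNgt Hm.
subst d; apply/morphimP; exists b => //; apply: val_inj; rewrite val_phi //.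
Qed.

Lemma commg_eq (x y z : G) : x * y = y * x * z -> [~ x, y] = z.
Proof. move=> e; apply: (mulgI (y * x)). rewrite -commgC e; reflexivity. Qed.

Lemma abel4 b b' u v : b \in sB X -> b' \in sB X -> u \in sB X -> v \in sB X ->
  b' * u * b * (u^-1 * v) = b * v * b'.
Proof.
move=> Hb Hb' Hu Hv.
have e1 : b' * u = u * b' by apply: (comB Hb' Hu).
rewrite e1 -(mulgA u b' b) -(mulgA u (b' * b)) (mulgA (b' * b)).
have e2 : b' * b * u^-1 = u^-1 * (b' * b) by apply: (comB (groupM Hb' Hb) (groupVr Hu)).
rewrite e2 !mulgA mulgV mul1g.
have e3 : b * v * b' = b' * (b * v) by apply: (comB (groupM Hb Hv) Hb').
by rewrite e3 !mulgA.
Qed.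

Lemma phi_der : phi @* sA X = [~: [set: G], [set: G]].
Proof.
apply/eqP; rewrite eqEsubset; apply/andP; split.
  apply/subsetP=> _ /morphimP[a Ha Ha' ->] /=.
  have <- : [~ mkG 1 1 one1, mkG a 1 0%R] = phi a.
    apply: commg_eq; apply: val_inj.
    rewrite !GvalM !val_mkG ?val_phi ?group1 ?sAB_mem //= /Gmul_raw /=.
    by rewrite expA1' // !expg1n !mulg1 !mul1g !addr0 add0r.
  by apply: mem_commg; rewrite inE.
rewrite gen_subG; apply/subsetP=> _ /imset2P[x y _ _ ->].
case: x => [[[a b] d] Hx]; have /andP [/= Ha Hb] := Hx.
case: y => [[[a' b'] d'] Hy]; have /andP [/= Ha' Hb'] := Hy.
have Hc : (a ^+ d')^-1 * a' ^+ d \in sA X by rewrite groupM ?groupV ?groupX.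
rewrite (commg_eq (z := phi ((a ^+ d')^-1 * a' ^+ d))); first by apply/morphimP; exists ((a ^+ d')^-1 * a' ^+ d); rewrite ?sAB_mem.
apply: val_inj; rewrite !GvalM val_phi ?sAB_mem // /Gmul_raw /=.
rewrite expg1n mulg1 addr0 (addrC d').
congr (_, _, _).
  exact: (comB (sAB_mem Ha) (sAB_mem Ha')).
rewrite mulg1; symmetry; apply: abel4 => //; rewrite groupX // sAB_mem //.
Qed.
End Phi.

Section Fwd.
Variables (gT hT : finGroupType) (X : sobj gT) (Y : sobj hT).
Variable f : {morphism sB X >-> hT}.
Hypotheses (isof : isom (sB X) (sB Y) f) (fA : f @* sA X = sA Y).

Let injf : 'injm f := isom_inj isof.
Let fB : f @* sB X = sB Y := isom_im isof.

Lemma gk_iso : gk X = gk Y.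
Proof. by rewrite /gk -fA exponent_injm // sA_sub. Qed.

Definition castd (d : 'I_(gk X).+1) : 'I_(gk Y).+1 := cast_ord (congr1 S gk_iso) d.

Definition F (x : Gof X) : Gof Y :=
  let: (a, b, d) := val x in @mkG _ Y (f a) (f b) (castd d).

Lemma fAmem a : a \in sA X -> f a \in sA Y.
Proof. by move=> Ha; rewrite -fA mem_morphim // sAB_mem. Qed.
Lemma fBmem b : b \in sB X -> f b \in sB Y.
Proof. by move=> Hb; rewrite -fB mem_morphim. Qed.

Lemma valF (x : Gof X) : val (F x) = (f (val x).1.1, f (val x).1.2, castd (val x).2).
Proof.
case: x => [[[a b] d] Hx]; have /andP [/= Ha Hb] := Hx.
by rewrite /F /= val_mkG ?fAmem ?fBmem.
Qed.

Lemma FM : {in [set: Gof X] &, {morph F : x y / x * y}}.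
Proof.
move=> x y _ _; apply: val_inj; rewrite GvalM !valF GvalM /Gmul_raw /=.
case: x => [[[a b] d] Hx]; have /andP [/= Ha Hb] := Hx.
case: y => [[[a' b'] d'] Hy]; have /andP [/= Ha' Hb'] := Hy.
have Ba := sAB_mem Ha; have Ba' := sAB_mem Ha'.
rewrite /= !morphM ?groupM ?groupX // morphX //; congr (_, _, _).
apply: val_inj => /=; have e := gk_iso; exact: (congr1 (fun k => (nat_of_ord d + nat_of_ord d') %% k.+1) e).
Qed.
Canonical F_morphism := Morphism FM.

Lemma F_inj : 'injm F.
Proof.
apply/injmP=> x y _ _ /(congr1 val); rewrite !valF.
case: x => [[[a b] d] Hx]; have /andP [/= Ha Hb] := Hx.
case: y => [[[a' b'] d'] Hy]; have /andP [/= Ha' Hb'] := Hy.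
case=> /(injmP injf) ea /(injmP injf) eb ed.
have ea' := ea (sAB_mem Ha) (sAB_mem Ha'); have eb' := eb Hb Hb'.
by apply: val_inj; rewrite /= ea' eb'; congr (_, _); apply: val_inj.
Qed.
End Fwd.
Lemma Siso_sym (gT hT : finGroupType) (A B : {group gT}) (A' B' : {group hT}) :
  A \subset B -> Siso A B A' B' -> Siso A' B' A B.
Proof.
move=> sAB [f [isof fA]].
exists (isom_inv isof); split; first exact: isom_sym.
have sAB' : A' \subset B' by rewrite -fA -(isom_im isof) morphimS.
rewrite /isom_inv restrmEsub // -fA morphim_invm //.
Qed.

Lemma Siso_trans (gT hT kT : finGroupType) (A B : {group gT}) (A' B' : {group hT})
   (A'' B'' : {group kT}) :
  A \subset B -> Siso A B A' B' -> Siso A' B' A'' B'' -> Siso A B A'' B''.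
Proof.
move=> sAB [f [isof fA]] [g [isog' gA]].
have sBd : B \subset 'dom (g \o f).
  by rewrite /dom /= -(isom_im isof) morphimGK ?subsetIl // (isom_inj isof).
exists (restrm sBd (g \o f)); split.
  apply/isomP; split; first by rewrite injm_restrm // injm_comp ?(isom_inj isof) ?(isom_inj isog').
  by rewrite restrmEsub // morphim_comp (isom_im isof) (isom_im isog').
by rewrite restrmEsub ?(subset_trans sAB) // morphim_comp fA gA.
Qed.

Lemma der_sub_center (gT : finGroupType) (X : sobj gT) :
  [~: [set: Gof X], [set: Gof X]] \subset 'Z([set: Gof X]).
Proof. by rewrite -phi_der -phi_center morphimS // sA_sub. Qed.

Lemma phi_Siso (gT : finGroupType) (X : sobj gT) :
  Siso (sA X) (sB X) [~: [set: Gof X], [set: Gof X]] 'Z([set: Gof X]).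
Proof.
exists (phi_morphism X); split; last exact: phi_der.
by apply/isomP; split; [exact: phi_inj | exact: phi_center].
Qed.

Lemma G_nil (gT : finGroupType) (X : sobj gT) : nilpotent [set: Gof X].
Proof.
suff <- : 'Z_2([set: Gof X]) = [set: Gof X] by apply: ucn_nilpotent.
apply/eqP; rewrite eqEsubset subsetT /= ucnSnR ucn1; apply/subsetP=> x _.
rewrite inE in_setT /=; apply: subset_trans (der_sub_center X).
by apply: commgSS; rewrite subsetT.
Qed.

Lemma Siso_card (gT hT : finGroupType) (X : sobj gT) (Y : sobj hT) :
  Siso (sA X) (sB X) (sA Y) (sB Y) -> #|[set: Gof X]| <= #|[set: Gof Y]|.
Proof.
case=> f [isof fA]; rewrite -(card_injm (F_inj isof fA)) ?subsetT //.
by apply: subset_leq_card; apply: subsetT.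
Qed.

Lemma Siso_isog (gT hT : finGroupType) (X : sobj gT) (Y : sobj hT) :
  Siso (sA X) (sB X) (sA Y) (sB Y) -> [set: Gof X] \isog [set: Gof Y].
Proof.
move=> S; have S' := Siso_sym (sA_sub X) S.
case: S => f [isof fA]; apply/isogP; exists (F_morphism isof fA); first exact: F_inj.
apply/eqP; rewrite eqEcard subsetT /= card_injm ?subsetT ?F_inj //.
exact: Siso_card S'.
Qed.

Lemma isog_Siso (gT hT : finGroupType) (X : sobj gT) (Y : sobj hT) :
  [set: Gof X] \isog [set: Gof Y] -> Siso (sA X) (sB X) (sA Y) (sB Y).
Proof.
case/isogP=> psi injpsi impsi.
apply: Siso_trans (sA_sub X) (phi_Siso X) _.
apply: Siso_trans (der_sub_center X) _ (Siso_sym (sA_sub Y) (phi_Siso Y)).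
exists (restrm (subsetT 'Z([set: Gof X])) psi); split.
  apply/isomP; split; first by rewrite injm_restrm.
  by rewrite restrmEsub // injm_center ?subsetT // impsi.
by rewrite restrmEsub ?der_sub_center // morphimR ?subsetT // impsi.
Qed.

Section Mu.
Variables (gT : finGroupType) (H K : {group gT}).
Hypothesis cHK : K \subset 'C(H).
Hypothesis tiHK : H :&: K = 1.

Definition mu (u : gT * gT) : gT := u.1 * u.2.

Lemma muM : {in setX H K &, {morph mu : x y / x * y}}.
Proof.
move=> [u1 u2] [v1 v2] /setXP [/= Hu1 Ku2] /setXP [/= Hv1 Kv2]; rewrite /mu /=.
have c : commute u2 v1 := (centsP cHK) u2 Ku2 v1 Hv1.
by rewrite -!mulgA; congr (u1 * _); rewrite !mulgA c.
Qed.
Canonical mu_morphism := Morphism muM.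

Lemma mu_inj : 'injm mu.
Proof.
apply/injmP=> [[u1 u2] [v1 v2]] /setXP [/= Hu1 Ku2] /setXP [/= Hv1 Kv2]; rewrite /mu /= => e.
have e1 : v1^-1 * u1 = v2 * u2^-1.
  by apply: (canRL (mulgK u2)); rewrite -mulgA e mulKg.
have : v1^-1 * u1 \in H :&: K.
  by rewrite inE groupM ?groupV //= e1 groupM ?groupV.
rewrite tiHK => /set1P /eqP; rewrite -eq_mulVg1 => /eqP eu1.
subst v1; by rewrite (mulgI _ _ _ e).
Qed.

Lemma mu_im (A B : {set gT}) : A \subset H -> B \subset K -> mu @* setX A B = A * B.
Proof.
move=> sAH sBK; rewrite morphimEsub ?setXS //.
rewrite -[A * B]/(mulg @2: (A, B)) curry_imset2X.
by apply: eq_imset => -[x y].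
Qed.

End Mu.

Lemma dprod_Siso (gT : finGroupType) (H K H1 K1 G G1 : {group gT}) :
  H \x K = G -> H1 \x K1 = G1 -> H1 \subset H -> K1 \subset K ->
  Siso (setX H1 K1) (setX H K) G1 G.
Proof.
move=> dG dG1 sH sK; have [_ eG cHK tiHK] := dprodP dG.
exists (mu_morphism cHK); split.
  apply/isomP; split; first exact: mu_inj.
  by rewrite mu_im // (dprodW dG).
by rewrite mu_im // (dprodW dG1).
Qed.

Lemma der_center_sub (gT : finGroupType) (X : sobj gT) (H : {group Gof X}) :
  H^`(1) \subset 'Z(H).
Proof.
apply/subsetP=> x Hx; apply/centerP; split; first exact: (subsetP (der_sub 1 H)).
have : x \in 'Z([set: Gof X]).
  apply: (subsetP (der_sub_center X)); rewrite -derg1.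
  exact: (subsetP (dergS 1 (subsetT H))).
by case/centerP=> _ cx y _; apply: cx; rewrite inE.
Qed.

Lemma G_indec (p n : nat) (gT : finGroupType) (X : sobj gT) :
  is_Sobj p n X -> Sindec p n X -> gindec (Gof X).
Proof.
move=> SX [ntB nodec] [H [K [dHK ntH ntK]]]; apply: nodec.
have dZ := center_dprod dHK.
have dD := der_dprod 1 dHK.
have sZ (L : {group Gof X}) : 'Z(L) \subset 'Z([set: Gof X]) -> is_Sobj p n (SObj (der_center_sub L) (center_abelian L)).
  move=> sL; rewrite /is_Sobj /=; apply: dvdn_trans (exponentS sL) _.
  by rewrite -phi_center exponent_injm ?phi_inj.
have ntZ (L : {group Gof X}) : L :!=: 1 -> 'Z(L) :!=: 1.
  by rewrite center_nil_eq1 // (nilpotentS (subsetT L) (G_nil X)).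
exists (Gof X), (Gof X), (SObj (der_center_sub H) (center_abelian H)),
  (SObj (der_center_sub K) (center_abelian K)); split => //=.
- by apply: sZ; rewrite -(dprodW dZ) mulG_subl.
- by apply: sZ; rewrite -(dprodW dZ) mulG_subr.
- by apply: ntZ.
- by apply: ntZ.
apply: Siso_trans (sA_sub X) (phi_Siso X) _.
apply: Siso_sym; first by rewrite setXS ?der_center_sub.
apply: dprod_Siso; [exact: dZ | exact: dD | exact: der_center_sub | exact: der_center_sub].
Qed.

End Helpers.
Import Helpers.

Theorem lemma1 (p n : nat) (hp : prime p) :
  (forall (gT : finGroupType) (X : sobj gT),
      is_Sobj p n X -> Sindec p n X -> gindec (Gof X)) /\
  (forall (gT hT : finGroupType) (X : sobj gT) (Y : sobj hT),
      is_Sobj p n X -> is_Sobj p n Y ->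
      (Siso (sA X) (sB X) (sA Y) (sB Y) <-> ([set: Gof X] \isog [set: Gof Y])%g)).
Proof.
split.
  by move=> gT X; apply: G_indec.
move=> gT hT X Y _ _; split; [exact: Siso_isog | exact: isog_Siso].
Qed.
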